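(* Let $d\ge 2$ and $N\in\mathbb{N}$. Let $P:\mathbb{C}^d\to\mathbb{C}$ be an entire function that is $(N\mathbb{Z})^d$-periodic, with restriction to $\mathbb{R}^d$ given by the Fourier series $$P(\mathbf{x})=\sum_{\mathbf{k}\in\mathbb{Z}^d} c_{\mathbf{k}}\,e^{2\pi i\mathbf{k}\cdot\mathbf{x}/N},\quad \mathbf{x}\in\mathbb{R}^d.$$ Then $P$ satisfies $$\sum_{\mathbf{n}\in\mathbb{Z}^d} P(\mathbf{x}+\mathbf{n})\,\chi_{[0,N]^d}(\mathbf{x}+\mathbf{n}) = 1\quad\text{for all }\mathbf{x}\in\mathbb{R}^d$$ if and only if $c_{\mathbf{k}}=\frac{1}{N^d}\delta_{\mathbf{k},\mathbf{0}}$ for all $\mathbf{k}\in(N\mathbb{Z})^d$.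
   Context: $\chi_{[0,N]^d}$ is the indicator function of $[0,N]^d$; $\delta_{\mathbf{k},\mathbf{0}}$ is the Kronecker delta. *)

(* Defs.v *)
From HB Require Import structures.
From mathcomp Require Import all_boot all_order all_algebra.
From mathcomp Require Import all_classical all_reals all_analysis.
From mathcomp Require Import complex.
Set Implicit Arguments. Unset Strict Implicit. Unset Printing Implicit Defensive.
Import Order.TTheory GRing.Theory Num.Theory.
Import numFieldNormedType.Exports.
Local Open Scope ring_scope.
Local Open Scope complex_scope.
Local Open Scope classical_set_scope.

Definition expi (R : realType) (t : R) : R[i] := (cos t) +i* (sin t).

Definition realvec (R : realType) (d : nat) (x : 'I_d -> R) : 'I_d -> R[i] :=
  fun i => (x i)%:C.

Definition zdot (R : realType) (d : nat) (k : 'I_d -> int) (x : 'I_d -> R) : R :=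
  \sum_(i < d) (k i)%:~R * x i.

(* Partial sum over the box [-M, M]^d of the lattice Z^d. *)
Definition boxsum (V : nmodType) (d M : nat) (F : ('I_d -> int) -> V) : V :=
  \sum_(k : {ffun 'I_d -> 'I_(M + M).+1}) F (fun i => (k i)%:Z - M%:Z).
Arguments boxsum {V} d M F.

(* P : C^d -> C is entire: complex-differentiable in each variable separately
   at every point (equivalent to holomorphy on C^d by Hartogs' theorem). *)
Definition entire (R : realType) (d : nat) (P : ('I_d -> R[i]) -> R[i]) : Prop :=
  forall (z : 'I_d -> R[i]) (i : 'I_d),
    derivable (fun w : R[i]^o => (P (fun j => if j == i then w else z j) : R[i]^o)) (z i) 1.

Definition lattice_periodic (R : realType) (d N : nat) (P : ('I_d -> R[i]) -> R[i]) : Prop :=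
  forall (z : 'I_d -> R[i]) (m : 'I_d -> int),
    P (fun i => z i + ((N%:Z * m i)%:~R)) = P z.

Definition chi_cube (R : realType) (d N : nat) (y : 'I_d -> R) : R[i] :=
  if [forall i, (0 <= y i) && (y i < N%:R)] then 1 else 0.

(* restriction of P to R^d is given by the (absolutely convergent) Fourier series
   sum_k c_k e^{2 pi i k.x/N}, summed over Z^d *)
Definition fourier_series_of (R : realType) (d N : nat)
  (P : ('I_d -> R[i]) -> R[i]) (c : ('I_d -> int) -> R[i]) : Prop :=
  (exists B : R[i], forall M, boxsum d M (fun k => `|c k|) <= B) /\
  forall x : 'I_d -> R,
    ((fun M => boxsum d M (fun k => c k * expi (2 * pi * zdot k x / N%:R)))
       : nat -> R[i]^o) @ \oo --> (P (realvec x) : R[i]^o).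

(* the lattice sum  sum_{n in Z^d} P(x+n) chi_{[0,N)^d}(x+n) = 1, the sum
   being taken as the limit of box partial sums (it has finitely many nonzero
   terms, so the limit is eventually attained) *)
Definition partition_of_unity (R : realType) (d N : nat)
  (P : ('I_d -> R[i]) -> R[i]) : Prop :=
  forall x : 'I_d -> R,
    ((fun M => boxsum d M (fun n =>
        let y := fun i => x i + (n i)%:~R in P (realvec y) * chi_cube N y))
       : nat -> R[i]^o) @ \oo --> (1 : R[i]^o).

(* Main.v *)
Require Import Defs.
From HB Require Import structures.
From mathcomp Require Import all_boot all_order all_algebra.
From mathcomp Require Import all_classical all_reals all_analysis.
From mathcomp Require Import complex.
From mathcomp Require Import zify ring lra.
Import Order.TTheory GRing.Theory Num.Theory.
Import numFieldNormedType.Exports.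
Local Open Scope ring_scope.
Local Open Scope complex_scope.

Section S.
Variable R : realType.

Lemma expiD (a b : R) : expi (a + b) = expi a * expi b.
Proof.
rewrite /expi cosD sinD; apply/eqP; rewrite eq_complex /=; apply/andP; split; apply/eqP; ring.
Qed.

Lemma expi0 : expi (0 : R) = 1.
Proof. by rewrite /expi cos0 sin0. Qed.

Lemma expiMn (a : R) (n : nat) : expi (a *+ n) = expi a ^+ n.
Proof. elim: n => [|n IH]; first by rewrite mulr0n expi0. by rewrite mulrS expiD IH exprS. Qed.

Lemma expi2pin (n : nat) : expi (2 * pi * n%:R : R) = 1.
Proof.
rewrite mulr_natr expiMn.
have -> : expi (2 * pi : R) = 1 by rewrite /expi mulrC mulr_natr cos2pi sin2pi.
by rewrite expr1n.
Qed.

Lemma expiN (a : R) : expi (- a) = (expi a)^-1.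
Proof.
have h : expi a * expi (- a) = 1 by rewrite -expiD subrr expi0.
by rewrite -[RHS]mul1r -h mulrAC mulfV ?mul1r // ; apply/eqP => h0; move: h; rewrite h0 mul0r => /eqP; rewrite eq_sym oner_eq0.
Qed.

Lemma expi2piz (n : int) : expi (2 * pi * n%:~R : R) = 1.
Proof.
case: n => n; first by rewrite expi2pin.
by rewrite NegzE mulrNz mulrN expiN expi2pin invr1.
Qed.

Lemma expi_sum (I : finType) (f : I -> R) : expi (\sum_i f i) = \prod_i expi (f i).
Proof.
elim/big_rec2: _ => [|i y1 y2 _ <-]; first by rewrite expi0.
by rewrite expiD.
Qed.

Lemma expi_eq1 (t : R) : 0 < t < 2 * pi -> expi t != 1.
Proof.
move=> /andP[t0 t2]; apply/negP => /eqP [] hc hs.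
have hsin : 0 < sin (t / 2) by apply: sin_gt0_pi; apply/andP; split; lra.
have : cos t = 1 - 2 * (sin (t/2))^+2.
  have -> : t = t/2 + t/2 by field.
  rewrite cosD.
  have := cos2Dsin2 (t/2 + t/2 - (t/2 + t/2) + t/2).
  rewrite subrr add0r => h. rewrite -!expr2. have -> : (t / 2 + t / 2) / 2 = t/2 by field.
  lra.
rewrite hc => h; have : sin (t/2) ^+ 2 = 0 by lra.
move/eqP; rewrite expf_eq0 /= => /eqP h2; lra.
Qed.

End S.

Local Open Scope complex_scope.
Section S.
Variable R : realType.

Lemma expi_root (L : nat) (k : int) : (0 < L)%N ->
  expi (2 * pi * k%:~R / L%:R : R) ^+ L = 1.
Proof.
move=> L0; rewrite -expiMn.
have -> : (2 * pi * k%:~R / L%:R) *+ L = 2 * pi * k%:~R :> R.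
  rewrite -mulr_natr -mulrA mulVf ?mulr1 // pnatr_eq0 -lt0n //.
exact: expi2piz.
Qed.

Lemma expi_root_eq1 (L : nat) (k : int) : (0 < L)%N ->
  (expi (2 * pi * k%:~R / L%:R : R) == 1) = (L%:Z %| k)%Z.
Proof.
move=> L0; have Lne : (L%:R : R) != 0 by rewrite pnatr_eq0 -lt0n.
have Lz : (L%:Z != 0) by rewrite eqz_nat -lt0n.
have e : expi (2 * pi * k%:~R / L%:R : R) = expi (2 * pi * (k %% L)%Z%:~R / L%:R).
  rewrite {1}(divz_eq k L) intrD mulrDr mulrDl expiD.
  have -> : 2 * pi * ((k %/ L)%Z * L)%:~R / L%:R = 2 * pi * (k %/ L)%Z%:~R :> R.
    by rewrite intrM -mulrA -mulrA mulrA; congr (_ * _); rewrite pmulrn mulfK.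
  by rewrite expi2piz mul1r.
rewrite e; apply/idP/idP.
  apply: contraLR => nd; apply: expi_eq1.
  have r0 : 0 <= (k %% L)%Z by apply: modz_ge0.
  have rL : (k %% L)%Z < L by apply: ltz_pmod; rewrite ltz_nat.
  have rne : (k %% L)%Z != 0 by apply: contra nd => /eqP /dvdz_mod0P.
  have r1 : (0 : R) < (k %% L)%Z%:~R by rewrite ltr0z lt_def rne r0.
  have r2 : ((k %% L)%Z%:~R : R) < L%:R by rewrite -[L%:R]/((L%:Z)%:~R) ltr_int.
  have Lp : (0 : R) < L%:R by rewrite ltr0n.
  have pp := pi_gt0 R.
  apply/andP; split.
    by apply: divr_gt0 => //; apply: mulr_gt0 => //; apply: mulr_gt0.
  rewrite ltr_pdivrMr // ltr_pM2l //; exact: mulr_gt0.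
by move/dvdz_mod0P => ->; rewrite mulr0 mul0r expi0.
Qed.

Lemma geom_expi (L : nat) (k : int) : (0 < L)%N ->
  \sum_(m < L) expi (2 * pi * k%:~R / L%:R : R) ^+ m = if (L%:Z %| k)%Z then L%:R else 0.
Proof.
move=> L0; rewrite -(@expi_root_eq1 L k L0); case: eqP => [->|/eqP ne].
  by rewrite (eq_bigr (fun _ => 1)) ?sumr_const ?card_ord // => i _; rewrite expr1n.
have := subrX1 (expi (2 * pi * k%:~R / L%:R : R)) L.
rewrite expi_root // subrr => /esym /eqP; rewrite mulf_eq0 subr_eq0 (negbTE ne) /=.
by move/eqP.
Qed.
End S.

Local Open Scope complex_scope.
Ltac gen_ord t := let a := fresh "a" in let ha := fresh "ha" in
  have ha := ltn_ord t; move: (nat_of_ord t) ha => a ha.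

Section Box.
Variable d : nat.

Definition inbox (M : nat) (n : 'I_d -> int) :=
  [forall i, (- M%:Z <= n i) && (n i <= M%:Z)].

Lemma prod_ind (V : comNzRingType) (p : pred 'I_d) (v : V) :
  \prod_(i < d) (if p i then v else 0) = if [forall i, p i] then v ^+ d else 0.
Proof.
case: forallP => [h|/forallP]; last first.
  rewrite negb_forall => /existsP [i pi].
  by rewrite (bigD1 i) //= (negbTE pi) mul0r.
by rewrite (eq_bigr (fun _ => v)) ?prodr_const ?card_ord // => i _; rewrite h.
Qed.

Lemma shift_inbox (M : nat) (k : {ffun 'I_d -> 'I_(M+M).+1}) :
  inbox M (fun i => (k i)%:Z - M%:Z).
Proof.
apply/forallP => i; have := ltn_ord (k i); move: (nat_of_ord (k i)) => a ha.
apply/andP; split; lia.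
Qed.

Lemma boxsum_restrict (V : nmodType) (R M : nat) (F : ('I_d -> int) -> V) :
  (R <= M)%N ->
  \sum_(k : {ffun 'I_d -> 'I_(M+M).+1} | inbox R (fun i => (k i)%:Z - M%:Z))
     F (fun i => (k i)%:Z - M%:Z) = boxsum d R F.
Proof.
move=> RM.
pose h := fun (k : {ffun 'I_d -> 'I_(R+R).+1}) =>
  [ffun i => (inord (k i + (M - R)) : 'I_(M+M).+1)].
pose h' := fun (k : {ffun 'I_d -> 'I_(M+M).+1}) =>
  [ffun i => (inord (k i - (M - R)) : 'I_(R+R).+1)].
rewrite (reindex_onto h h').
  rewrite /boxsum; apply: eq_big.
    move=> j /=; apply/andP; split.
      apply/forallP => i; rewrite /h ffunE inordK; last first.
        gen_ord (j i); lia.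
      gen_ord (j i); apply/andP; split; lia.
    apply/eqP/ffunP => i; rewrite /h' /h !ffunE; apply: val_inj => /=.
    rewrite (@inordK (M+M) (j i + (M - R))); last by gen_ord (j i); lia.
    rewrite inordK; gen_ord (j i); lia.
  move=> j _; congr F; apply: funext => i; rewrite /h ffunE inordK; last first.
    gen_ord (j i); lia.
  gen_ord (j i); lia.
move=> k /forallP hk; apply/ffunP => i; rewrite /h /h' !ffunE; apply: val_inj => /=.
have := hk i; have := ltn_ord (k i); move: (nat_of_ord (k i)) => a ha /andP [h1 h2].
rewrite (@inordK (R+R) (a - (M - R))); last by lia.
rewrite inordK; lia.
Qed.

Lemma boxsum_single (V : nmodType) (R : nat) (j0 : 'I_d -> int) (v : V) :
  inbox R j0 ->
  boxsum d R (fun k => if [forall i, k i == j0 i] then v else 0) = v.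
Proof.
move=> /forallP hj.
pose k0 : {ffun 'I_d -> 'I_(R+R).+1} :=
  [ffun i => (inord (absz (j0 i + R%:Z)) : 'I_(R+R).+1)].
have hk0 : forall i, (k0 i)%:Z - R%:Z = j0 i.
  move=> i; rewrite /k0 ffunE; have := hj i; move=> /andP [h1 h2].
  rewrite inordK; lia.
rewrite /boxsum (bigD1 k0) //=.
rewrite (_ : [forall i, _] = true); last by apply/forallP => i; rewrite hk0.
rewrite big1 ?addr0 // => k kk0.
case: forallP => // h; exfalso; move/eqP: kk0; apply.
apply/ffunP => i; apply: val_inj => /=; have := h i; rewrite -(hk0 i).
move/eqP; lia.
Qed.

End Box.

Local Open Scope complex_scope.
Set Implicit Arguments. Unset Strict Implicit.
Section S.
Variable R : realType.

Definition chi1 (N : nat) (y : R) : R[i] := if (0 <= y) && (y < N%:R) then 1 else 0.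

Lemma chi1_int (N : nat) (x : R) (n : int) :
  chi1 N (x + n%:~R) = if (- n <= Num.floor x) && (Num.floor x < N%:Z - n) then 1 else 0.
Proof.
rewrite /chi1 floor_ge_int floor_lt_int.
have -> : (0 <= x + n%:~R) = ((- n)%:~R <= x).
  by rewrite intrN; apply/idP/idP => h; lra.
have -> : (x + n%:~R < N%:R) = (x < (N%:Z - n)%:~R).
  by rewrite intrB; apply/idP/idP => h; lra.
by [].
Qed.

Lemma T1D (N : nat) (x : R) (k : int) (M : nat) : (0 < N)%N ->
  (absz (Num.floor x) + N <= M)%N ->
  \sum_(j < (M+M).+1) chi1 N (x + ((j%:Z - M%:Z)%:~R)) *
     expi (2 * pi * (k%:~R * (j%:Z - M%:Z)%:~R) / N%:R)
  = if (N%:Z %| k)%Z then N%:R else 0.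
Proof.
move=> N0 hM.
set fl := Num.floor x in hM *.
pose s := absz (M%:Z - fl).
have Nne : (N%:R : R) != 0 by rewrite pnatr_eq0 -lt0n.
pose g := fun j : nat => expi (2 * pi * (k%:~R * (j%:Z - M%:Z)%:~R) / N%:R : R).
rewrite (eq_bigr (fun j : 'I_(M+M).+1 => if (s <= j < s + N)%N then g j else 0)); last first.
  move=> j _; rewrite chi1_int -/fl.
  have -> : (- (j%:Z - M%:Z) <= fl) && (fl < N%:Z - (j%:Z - M%:Z)) = (s <= j < s + N)%N.
    rewrite /s; apply/idP/idP.
      by move=> /andP[h1 h2]; apply/andP; split; lia.
    by move=> /andP[h1 h2]; apply/andP; split; lia.
  by case: ifP; rewrite ?mul1r ?mul0r.
rewrite -(big_mkord xpredT (fun j => if (s <= j < s + N)%N then g j else 0)).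
have s1 : (s <= s + N)%N by lia.
have s2 : (s + N <= (M+M).+1)%N by rewrite /s; lia.
rewrite (big_cat_nat (leq0n s) (leq_trans s1 s2)) /=.
rewrite (big_cat_nat s1 s2) /=.
rewrite big_nat_cond big1 ?add0r; last by move=> i /andP [/andP [_ h] _]; case: ifP => //; lia.
rewrite [X in _ + X](_ : _ = 0) ?addr0; last first.
  by rewrite big_nat_cond big1 // => i /andP [/andP [h _] _]; case: ifP => //; lia.
rewrite (eq_big_nat _ _ (F2 := g)); last by move=> i hi; rewrite hi.
rewrite -{1}[s]add0n big_addn.
have -> : (s + N - s = N)%N by lia.
rewrite big_mkord.
pose w := expi (2 * pi * k%:~R / N%:R : R).
pose a := - fl.
rewrite (eq_bigr (fun j : 'I_N => expi (2 * pi * k%:~R * a%:~R / N%:R) * w ^+ j)); last first.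
  move=> j _; rewrite /g /w -expiMn -expiD; congr expi.
  have -> : ((j + s)%N%:Z - M%:Z) = j%:Z + a by rewrite /a /s; lia.
  rewrite intrD -mulr_natr; field.
  by rewrite Nne.
rewrite -mulr_sumr geom_expi //.
case: ifP => [/dvdzP [q hq]|_]; last by rewrite mulr0.
rewrite hq.
have -> : 2 * pi * (q * N%:Z)%:~R * a%:~R / N%:R = 2 * pi * (q * a)%:~R :> R.
  rewrite !intrM; field; by rewrite Nne.
by rewrite expi2piz mul1r.
Qed.
End S.

Set Implicit Arguments. Unset Strict Implicit.
Section S.
Variable R : realType.
Variable d N : nat.

Definition ee (k : 'I_d -> int) (x : 'I_d -> R) : R[i] := expi (2 * pi * zdot k x / N%:R).
Definition shiftv (x : 'I_d -> R) (n : 'I_d -> int) := fun i => x i + (n i)%:~R.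
Definition TM (M : nat) (k : int) (x : R) :=
  \sum_(j < (M+M).+1) chi1 N (x + ((j%:Z - M%:Z)%:~R)) *
     expi (2 * pi * (k%:~R * (j%:Z - M%:Z)%:~R) / N%:R).

Lemma chi_cube_prod (y : 'I_d -> R) : chi_cube N y = \prod_i chi1 N (y i).
Proof. by rewrite /chi_cube /chi1 prod_ind expr1n. Qed.

Lemma ee_shift (k : 'I_d -> int) (x : 'I_d -> R) (n : 'I_d -> int) :
  ee k (shiftv x n) = ee k x * \prod_i expi (2 * pi * ((k i)%:~R * (n i)%:~R) / N%:R).
Proof.
rewrite /ee /zdot /shiftv -expi_sum -expiD; congr expi.
rewrite -mulr_suml -mulr_sumr -mulrDl -mulrDr -big_split /=.
by congr (_ * _ / _); apply: eq_bigr => i _; rewrite mulrDr.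
Qed.

Lemma box_prod (M : nat) (k : 'I_d -> int) (x : 'I_d -> R) :
  boxsum d M (fun n => chi_cube N (shiftv x n) * ee k (shiftv x n)) =
  ee k x * \prod_i TM M (k i) (x i).
Proof.
rewrite /boxsum /TM.
rewrite (bigA_distr_bigA (fun i (j : 'I_(M+M).+1) => chi1 N (x i + ((j%:Z - M%:Z)%:~R)) *
     expi (2 * pi * ((k i)%:~R * (j%:Z - M%:Z)%:~R) / N%:R))) /=.
rewrite mulr_sumr; apply: eq_bigr => kk _.
rewrite chi_cube_prod ee_shift /shiftv mulrCA; congr (_ * _).
by rewrite -big_split.
Qed.
End S.

Set Implicit Arguments. Unset Strict Implicit.
Local Open Scope classical_set_scope.
Section S.
Variable R : realType.
Variable d N : nat.

Definition Dk (k : 'I_d -> int) : R[i] :=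
  if [forall i, (N%:Z %| k i)%Z] then N%:R ^+ d else 0.
Definition M0 (x : 'I_d -> R) := (\max_(i < d) (absz (Num.floor (x i)) + N))%N.

Lemma TM_big (M : nat) (k : 'I_d -> int) (x : 'I_d -> R) : (0 < N)%N -> (M0 x <= M)%N ->
  \prod_i TM N M (k i) (x i) = Dk k.
Proof.
move=> N0 hM; rewrite /Dk -prod_ind; apply: eq_bigr => i _.
rewrite /TM T1D //; apply: leq_trans hM; rewrite /M0.
by rewrite (bigD1 i) //= leq_maxl.
Qed.

Lemma lattice_lim (P : ('I_d -> R[i]) -> R[i]) (c : ('I_d -> int) -> R[i])
   (x : 'I_d -> R) (M : nat) : (0 < N)%N -> fourier_series_of N P c -> (M0 x <= M)%N ->
  ((fun L => boxsum d L (fun k => c k * ee N k x * Dk k)) : nat -> R[i]^o) @ \oo -->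
   (boxsum d M (fun n => let y := fun i => x i + (n i)%:~R in
        P (realvec y) * chi_cube N y) : R[i]^o).
Proof.
move=> N0 [_ hF] hM.
pose Ff := fun (kk : {ffun 'I_d -> 'I_(M+M).+1}) (L : nat) =>
  (boxsum d L (fun k => c k * ee N k (shiftv x (fun i => (kk i)%:Z - M%:Z))) *
    chi_cube N (shiftv x (fun i => (kk i)%:Z - M%:Z)) : R[i]^o).
have E : forall L, boxsum d L (fun k => c k * ee N k x * Dk k) =
    \sum_(kk <- index_enum _ | xpredT kk) Ff kk L.
  move=> L; rewrite /Ff /boxsum /=.
  under [RHS]eq_bigr do rewrite mulr_suml.
  rewrite exchange_big /=; apply: eq_bigr => k _.
  under [RHS]eq_bigr do rewrite -mulrA [X in _ * X]mulrC.
  rewrite -mulr_sumr.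
  have := box_prod N M (fun i => (k i)%:Z - L%:Z) x; rewrite /boxsum => ->.
  by rewrite TM_big // mulrA.
rewrite (eq_cvg _ _ E).
pose Fa := fun kk : {ffun 'I_d -> 'I_(M+M).+1} =>
   (P (realvec (shiftv x (fun i => (kk i)%:Z - M%:Z))) *
      chi_cube N (shiftv x (fun i => (kk i)%:Z - M%:Z)) : R[i]^o).
have FF : Filter (\oo : set_system nat) by exact: _.
have H1 : forall kk : {ffun 'I_d -> 'I_(M+M).+1}, xpredT kk -> (Ff kk @ \oo --> Fa kk).
  by move=> kk _; exact: (@cvgMr_tmp _ _ _ FF _ _ _ (hF (shiftv x (fun i => (kk i)%:Z - M%:Z)))).
exact: (cvg_big (@add_continuous _) FF H1).
Qed.
End S.

Set Implicit Arguments. Unset Strict Implicit.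
Local Open Scope classical_set_scope.
Section S.
Variable R : realType.

Lemma lim_uniq (u : nat -> R[i]^o) (a b : R[i]^o) : u @ \oo --> a -> u @ \oo --> b -> a = b.
Proof. by move=> ha hb; apply: (cvg_unique _ ha hb). Qed.

Lemma cvg_evconst (T : topologicalType) (u : nat -> T) (v : T) (M0 : nat) :
  (forall M, (M0 <= M)%N -> u M = v) -> u @ \oo --> v.
Proof.
move=> hu; apply: (@cvg_trans _ ((fun _ => v) @ \oo)); last exact: cvg_cst.
apply: near_eq_cvg; near=> M; symmetry; apply: hu.
near: M; exact: nbhs_infty_ge.
Unshelve. all: by end_near.
Qed.

Variables (d N : nat).

Lemma pou_iff (P : ('I_d -> R[i]) -> R[i]) (c : ('I_d -> int) -> R[i]) :
  (0 < N)%N -> fourier_series_of N P c ->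
  partition_of_unity N P <-> forall x : 'I_d -> R,
   ((fun L => boxsum d L (fun k => c k * ee N k x * Dk R N k)) : nat -> R[i]^o) @ \oo --> (1 : R[i]^o).
Proof.
move=> N0 hF; split => h x.
  have hl := @lattice_lim R d N P c x (M0 N x) N0 hF (leqnn _).
  suff -> : (1 : R[i]^o) = boxsum d (M0 N x) (fun n => let y := fun i => x i + (n i)%:~R in
        P (realvec y) * chi_cube N y) by [].
  apply: (lim_uniq (h x)); apply: (@cvg_evconst _ _ _ (M0 N x)) => M hM.
  exact: (lim_uniq (@lattice_lim R d N P c x M N0 hF hM) hl).
apply: (@cvg_evconst _ _ _ (M0 N x)) => M hM.
exact: (lim_uniq (@lattice_lim R d N P c x M N0 hF hM) (h x)).
Qed.

Lemma backward (c : ('I_d -> int) -> R[i]) (x : 'I_d -> R) :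
  (0 < N)%N ->
  (forall k : 'I_d -> int, (forall j, (N%:Z %| k j)%Z) ->
     c k = (if [forall j, k j == 0] then (N%:R ^+ d)^-1 else 0)) ->
  ((fun L => boxsum d L (fun k => c k * ee N k x * Dk R N k)) : nat -> R[i]^o) @ \oo --> (1 : R[i]^o).
Proof.
move=> N0 hc; apply: (@cvg_evconst _ _ _ 0) => L _.
have Nne : (N%:R : R[i]) ^+ d != 0 by apply: expf_neq0; rewrite pnatr_eq0 -lt0n.
rewrite -(@boxsum_single d _ L (fun _ => 0) (1 : R[i])); last first.
  by apply/forallP => i; apply/andP; split; lia.
rewrite /boxsum; apply: eq_bigr => k _.
rewrite /Dk; case: forallP => hd.
  rewrite hc //; case: forallP => h0.
    rewrite mulrAC mulVf // mul1r /ee /zdot.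
    rewrite (eq_bigr (fun _ => 0)); last by move=> i _; rewrite (eqP (h0 i)) mul0r.
    by rewrite big1 // mulr0 mul0r expi0.
  by rewrite !mul0r.
case: forallP => [h0|_]; last by rewrite mulr0.
exfalso; apply: hd => i; move: (h0 i) => /eqP ->; exact: dvdz0.
Qed.
End S.

Set Implicit Arguments. Unset Strict Implicit.
Local Open Scope classical_set_scope.
Section S.
Variable R : realType.
Variables (d N : nat).

Definition xm (Lg : nat) (m : {ffun 'I_d -> 'I_Lg}) : 'I_d -> R :=
  fun i => N%:R * (m i)%:R / Lg%:R.

Lemma grid (Lg : nat) (k j : 'I_d -> int) : (0 < Lg)%N -> (0 < N)%N ->
  \sum_(m : {ffun 'I_d -> 'I_Lg}) ee N k (xm m) * ee N j (xm m) =
  Lg%:R ^+ d * (if [forall i, (Lg%:Z %| k i + j i)%Z] then 1 else 0).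
Proof.
move=> L0 N0.
have Nne : (N%:R : R) != 0 by rewrite pnatr_eq0 -lt0n.
have Lne : (Lg%:R : R) != 0 by rewrite pnatr_eq0 -lt0n.
rewrite (eq_bigr (fun m : {ffun 'I_d -> 'I_Lg} => \prod_i
   (expi (2 * pi * (k i + j i)%:~R / Lg%:R : R)) ^+ (m i))); last first.
  move=> m _; rewrite /ee -expiD.
  under [RHS]eq_bigr do rewrite -expiMn.
  rewrite -expi_sum; congr expi.
  rewrite /zdot !mulr_sumr !mulr_suml -big_split /=; apply: eq_bigr => i _.
  rewrite /xm intrD -mulr_natr; field.
  by rewrite Nne Lne.
rewrite -(bigA_distr_bigA (fun i (t : 'I_Lg) =>
   (expi (2 * pi * (k i + j i)%:~R / Lg%:R : R)) ^+ t)) /=.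
under eq_bigr do rewrite geom_expi //.
rewrite prod_ind; case: ifP; by rewrite ?mulr1 ?mulr0.
Qed.

Lemma ee0 (x : 'I_d -> R) : ee N (fun _ => 0) x = 1.
Proof.
rewrite /ee /zdot big1 ?mulr0 ?mul0r ?expi0 // => i _; by rewrite mul0r.
Qed.

Lemma grid_cvg (a : ('I_d -> int) -> R[i]) (C : R[i]) (j0 : 'I_d -> int) (Lg : nat) :
  (0 < Lg)%N -> (0 < N)%N ->
  (forall x : 'I_d -> R,
    ((fun L => boxsum d L (fun k => a k * ee N k x)) : nat -> R[i]^o) @ \oo --> (C : R[i]^o)) ->
  ((fun L => boxsum d L (fun k => a k * (if [forall i, (Lg%:Z %| k i - j0 i)%Z] then 1 else 0)))
     : nat -> R[i]^o) @ \oo -->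
  (C * (if [forall i, (Lg%:Z %| j0 i)%Z] then 1 else 0) : R[i]^o).
Proof.
move=> L0 N0 hG.
pose jm := fun i => - j0 i.
have FF : Filter (\oo : set_system nat) by exact: _.
pose Ff := fun (m : {ffun 'I_d -> 'I_Lg}) (L : nat) =>
  (boxsum d L (fun k => a k * ee N k (xm m)) * ee N jm (xm m) : R[i]^o).
pose Fa := fun (m : {ffun 'I_d -> 'I_Lg}) => (C * ee N jm (xm m) : R[i]^o).
have H1 : forall m : {ffun 'I_d -> 'I_Lg}, xpredT m -> (Ff m @ \oo --> Fa m).
  by move=> m _; exact: (@cvgMr_tmp _ _ _ FF _ _ _ (hG (xm m))).
have Hs := @cvg_big _ _ +%R 0 xpredT (@add_continuous _) _ \oo (index_enum _) Ff Fa FF H1.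
have Ld : (Lg%:R : R[i]) ^+ d != 0 by apply: expf_neq0; rewrite pnatr_eq0 -lt0n.
have E1 : \big[+%R/0]_(m <- index_enum _ | xpredT m) Fa m =
    Lg%:R ^+ d * (C * (if [forall i, (Lg%:Z %| j0 i)%Z] then 1 else 0)).
  rewrite /Fa -mulr_sumr.
  under eq_bigr => m _ do rewrite -[ee N jm _]mul1r -{1}(ee0 (xm m)).
  rewrite grid // mulrCA; congr (_ * (_ * _)).
  congr (if _ then _ else _); apply: eq_forallb => i.
  by rewrite add0r /jm !dvdzE abszN.
have E2 : forall L, \big[+%R/0]_(m <- index_enum _ | xpredT m) Ff m L =
    Lg%:R ^+ d * boxsum d L (fun k => a k * (if [forall i, (Lg%:Z %| k i - j0 i)%Z] then 1 else 0)).
  move=> L; rewrite /Ff /boxsum.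
  under eq_bigr do rewrite mulr_suml.
  rewrite exchange_big /= mulr_sumr; apply: eq_bigr => k _.
  under eq_bigr do rewrite -mulrA.
  by rewrite -mulr_sumr grid // mulrCA.
rewrite E1 in Hs.
have Hs2 := @cvgMl_tmp _ _ _ FF _ ((Lg%:R : R[i]) ^+ d)^-1 _ Hs.
rewrite (mulKf Ld) in Hs2.
suff E3 : (fun L => boxsum d L (fun k => a k * (if [forall i, (Lg%:Z %| k i - j0 i)%Z] then 1 else 0)))
  =1 (fun L => ((Lg%:R : R[i])^+d)^-1 * \big[+%R/0]_(m <- index_enum _ | xpredT m) Ff m L).
  by rewrite (eq_cvg _ _ E3).
by move=> L /=; rewrite E2 (mulKf Ld).
Qed.
End S.

Set Implicit Arguments. Unset Strict Implicit.
Local Open Scope classical_set_scope.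
Section S.
Variable R : realType.
Variables (d N : nat).

Definition nrm (z : R[i]) : R := complex.Re `|z|.

Lemma normE (z : R[i]) : `|z| = (nrm z)%:C.
Proof. by rewrite /nrm normc_def. Qed.

Lemma nrm_ge0 (z : R[i]) : 0 <= nrm z.
Proof. by have := normr_ge0 z; rewrite lecE => /andP[]. Qed.

Lemma near_oo (P : nat -> Prop) : (\forall n \near \oo, P n) -> exists n0, forall n, (n0 <= n)%N -> P n.
Proof. by move=> [n0 _ h]; exists n0 => n hn; apply: h. Qed.

Lemma sumC (I : finType) (Q : pred I) (f : I -> R) : (\sum_(i | Q i) f i)%:C = \sum_(i | Q i) (f i)%:C.
Proof. by rewrite rmorph_sum. Qed.

Lemma dvd_small (Lg : nat) (m : int) : (Lg%:Z %| m)%Z -> (absz m < Lg)%N -> m = 0.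
Proof.
rewrite dvdzE /= => hd hl.
have [h0|hp] := eqVneq (absz m) 0%N; first by apply/eqP; rewrite -absz_eq0 h0.
have hp' : (0 < absz m)%N by rewrite lt0n.
have := dvdn_leq hp' hd; lia.
Qed.

Definition Jm (j0 : 'I_d -> int) := (\max_(i < d) absz (j0 i))%N.

Lemma Jm_ge (j0 : 'I_d -> int) i : (absz (j0 i) <= Jm j0)%N.
Proof. by rewrite /Jm (bigD1 i) //= leq_maxl. Qed.

Definition bs (a : ('I_d -> int) -> R[i]) (M : nat) := boxsum d M (fun k => nrm (a k)).

Lemma bs_split (a : ('I_d -> int) -> R[i]) (Rr L : nat) : (Rr <= L)%N ->
  bs a L = bs a Rr + \sum_(kk : {ffun 'I_d -> 'I_(L+L).+1} |
      ~~ inbox d Rr (fun i => (kk i)%:Z - L%:Z)) nrm (a (fun i => (kk i)%:Z - L%:Z)).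
Proof.
move=> RL; rewrite /bs /boxsum.
rewrite (bigID (fun kk : {ffun 'I_d -> 'I_(L+L).+1} => inbox d Rr (fun i => (kk i)%:Z - L%:Z))) /=.
by have := boxsum_restrict d _ Rr L (fun k => nrm (a k)) RL; rewrite /= => ->.
Qed.

Lemma bs_mono (a : ('I_d -> int) -> R[i]) : nondecreasing_seq (bs a).
Proof.
move=> n m nm; rewrite (bs_split a nm) lerDl; apply: sumr_ge0 => kk _; exact: nrm_ge0.
Qed.

Definition indg (Lg : nat) (j0 k : 'I_d -> int) : R[i] :=
  if [forall i, (Lg%:Z %| k i - j0 i)%Z] then 1 else 0.

Lemma tail (a : ('I_d -> int) -> R[i]) (j0 : 'I_d -> int) (Lg Rr L : nat) :
  (Jm j0 <= Rr)%N -> (Rr + Jm j0 < Lg)%N -> (Rr <= L)%N ->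
  `|boxsum d L (fun k => a k * indg Lg j0 k) - a j0| <= (bs a L - bs a Rr)%:C.
Proof.
move=> hJ hL hRL.
have inj0 : inbox d Rr j0.
  by apply/forallP => i; have := Jm_ge j0 i; move=> h; apply/andP; split; lia.
have E1 : boxsum d Rr (fun k => a k * indg Lg j0 k) = a j0.
  rewrite -(boxsum_single d _ Rr j0 (a j0) inj0) /boxsum; apply: eq_bigr => kk _.
  have hk := shift_inbox d Rr kk.
  case: forallP => [heq|hne].
    have -> : (fun i => (kk i)%:Z - Rr%:Z) = j0 by apply: funext => i; apply/eqP/heq.
    by rewrite /indg (_ : [forall i, _] = true) ?mulr1 //; apply/forallP => i; rewrite subrr dvdz0.
  rewrite /indg; case: forallP => [hdv|_]; last by rewrite mulr0.
  exfalso; apply: hne => i; rewrite -subr_eq0; apply/eqP.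
  apply: (dvd_small (hdv i)); move/forallP: hk => /(_ i) hki; have := Jm_ge j0 i; lia.
rewrite /boxsum (bigID (fun kk : {ffun 'I_d -> 'I_(L+L).+1} => inbox d Rr (fun i => (kk i)%:Z - L%:Z))) /=.
have := boxsum_restrict d _ Rr L (fun k => a k * indg Lg j0 k) hRL; rewrite /= => ->.
rewrite E1 addrC addKr.
apply: le_trans (ler_norm_sum _ _ _) _.
rewrite (bs_split a hRL) [bs a Rr + _]addrC addrK sumC.
apply: ler_sum => kk _; rewrite -normE normrM /indg.
by case: ifP => _; rewrite ?normr1 ?normr0 ?mulr1 ?mulr0 ?normr_ge0.
Qed.

End S.

Set Implicit Arguments. Unset Strict Implicit.
Local Open Scope classical_set_scope.
Section S.
Variable R : realType.
Variables (d N : nat).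

Lemma uniq_coef (a : ('I_d -> int) -> R[i]) (C : R[i]) (B : R) :
  (0 < N)%N -> (forall M, bs a M <= B) ->
  (forall x : 'I_d -> R,
    ((fun L => boxsum d L (fun k => a k * ee N k x)) : nat -> R[i]^o) @ \oo --> (C : R[i]^o)) ->
  forall j0, a j0 = if [forall i, j0 i == 0] then C else 0.
Proof.
move=> N0 hB hG j0.
set target := (if [forall i, j0 i == 0] then C else 0).
have mono := bs_mono a.
have ub : has_ubound (range (bs a)) by exists B => _ [n _ <-]; apply: hB.
have hS := nondecreasing_cvgn mono ub.
set S := sup (range (bs a)) in hS.
have hsup : has_sup (range (bs a)) by split => //; exists (bs a 0), 0%N.
have hbS : forall n, bs a n <= S.
  by move=> n; have /ubP := sup_upper_bound hsup; apply; exists n.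
have tgt : forall Lg, (Jm j0 < Lg)%N ->
    C * (if [forall i, (Lg%:Z %| j0 i)%Z] then 1 else 0) = target.
  move=> Lg hLg; rewrite /target; case: (boolP [forall i, j0 i == 0]) => [/forallP h0|/forallP hn].
    rewrite (_ : [forall i, _] = true) ?mulr1 //; apply/forallP => i.
    by rewrite (eqP (h0 i)) dvdz0.
  case: forallP => [hd|_]; last by rewrite mulr0.
  exfalso; apply: hn => i; apply/eqP; apply: (dvd_small (hd i)).
  have := Jm_ge j0 i; lia.
pose del := nrm (target - a j0).
have key : forall e : R, 0 < e -> del <= e + e.
  move=> e e0.
  have [n0 hn0] : exists n0, forall n, (n0 <= n)%N -> `|S - bs a n| < e.
    by apply: near_oo; exact: ((cvgrPdist_lt _ _).1 hS e e0).
  pose Rr := (n0 + Jm j0)%N; pose Lg := (n0 + Jm j0 + Jm j0).+1.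
  have hG' := @grid_cvg R d N a C j0 Lg isT N0 hG.
  rewrite tgt in hG'; last by rewrite /Lg; lia.
  have [L1 hL1] : exists L1, forall L, (L1 <= L)%N ->
      `|target - boxsum d L (fun k => a k * @indg R d Lg j0 k)| < e%:C.
    apply: near_oo; apply: ((cvgrPdist_lt _ _).1 hG'); by rewrite ltcR.
  pose L := maxn L1 Rr.
  have h1 := hL1 L (leq_maxl _ _).
  have hlt : (Rr + Jm j0 < Lg)%N by rewrite /Rr /Lg; lia.
  have h2 := @tail R d a j0 Lg Rr L (leq_addl _ _) hlt (leq_maxr _ _).
  have h3 := hn0 Rr (leq_addr _ _).
  have h4 := hbS L.
  have h5 := ler_distD (boxsum d L (fun k => a k * @indg R d Lg j0 k)) target (a j0).
  rewrite normE [X in _ <= X + _]normE [X in _ <= _ + X]normE -rmorphD lecR in h5.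
  rewrite normE ltcR in h1.
  rewrite normE lecR in h2.
  have := ler_norm (S - bs a Rr).
  rewrite /del; lra.
have hd : del = 0.
  apply/eqP; rewrite eq_le nrm_ge0 andbT; case: leP => // hp.
  have := key (del / 4); lra.
apply/eqP; rewrite eq_sym -subr_eq0 -normr_eq0 normE -/del hd; exact/eqP.
Qed.
End S.

Local Open Scope classical_set_scope.

Theorem corollary2p3 (R : realType) (d N : nat)
    (P : ('I_d -> R[i]) -> R[i]) (c : ('I_d -> int) -> R[i]) :
  (2 <= d)%N -> (0 < N)%N ->
  entire P -> lattice_periodic N P -> fourier_series_of N P c ->
  (partition_of_unity N P <->
   forall k : 'I_d -> int, (forall j, (N%:Z %| k j)%Z) ->
     c k = (if [forall j, k j == 0] then (N%:R ^+ d)^-1 else 0)).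
Proof.
move=> _ N0 _ _ hF.
rewrite (pou_iff N0 hF); split; last by move=> hc x; exact: backward.
move=> h.
have Nd0 : (N%:R : R[i]) ^+ d != 0 by apply: expf_neq0; rewrite pnatr_eq0 -lt0n.
pose a := fun k => c k * Dk R N k.
have [B hB] := hF.1.
have hB' : forall M, bs a M <= complex.Re (N%:R ^+ d * B).
  move=> M.
  have : (bs a M)%:C <= N%:R ^+ d * B.
    rewrite /bs /boxsum sumC.
    apply: (@le_trans _ _ (N%:R ^+ d * boxsum d M (fun k => `|c k|))); last first.
      by apply: ler_wpM2l => //; apply: exprn_ge0; apply: ler0n.
    rewrite /boxsum mulr_sumr; apply: ler_sum => kk _.
    rewrite -normE /a normrM mulrC /Dk.
    case: ifP => _; last by rewrite normr0 mul0r mulr_ge0 ?normr_ge0 // exprn_ge0 // ler0n.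
    by rewrite normrX normr_nat.
  by rewrite lecE => /andP [_].
have hG : forall x : 'I_d -> R,
    ((fun L => boxsum d L (fun k => a k * ee N k x)) : nat -> R[i]^o) @ \oo --> (1 : R[i]^o).
  move=> x; have := h x.
  have -> : (fun k => c k * ee N k x * Dk R N k) = (fun k => a k * ee N k x).
    by apply: funext => k; rewrite /a mulrAC.
  by [].
have hu := uniq_coef N0 hB' hG.
move=> k hk; have := hu k; rewrite /a /Dk (_ : [forall i, _] = true); last first.
  by apply/forallP.
move=> e; apply: (mulIf Nd0); rewrite e.
by case: ifP; rewrite ?mul0r // mulVf.
Qed.
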